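(* Let $M_0=\mathbb A^2$ with coordinates $(x,y)$, $l_x=\{x=0\}$, $c_1=(0,0)$, and let $M_\ell\to\dots\to M_1\to M_0$ be the sequence of blow-ups where $M_j\to M_{j-1}$ blows up the point $c_j$, with $c_1=(0,0)$ and, for $j\ge2$, $c_j$ the intersection of the strict transform of $l_x$ in $M_{j-1}$ with the exceptional divisor of $M_{j-1}\to M_{j-2}$. Let $P=(m_1\ge\dots\ge m_\ell)$ be a partition of $r$ and let $X\subset M_0$ be the curve $F(x,y)=y^r+s_1(x)y^{r-1}+\dots+s_r(x)=0$, $s_\mu\in\mathbb C[x]$. The following are equivalent: (1) $X$ passes through $c_1$ with multiplicity at least $m_1$, and for $j=2,\dots,\ell$ the total transform of $X$ in $M_{j-1}$ passes through $c_j$ with multiplicity at least $m_1+\dots+m_j$; (2) for all $1\le\mu\le r$, the vanishing order of $s_\mu$ at $x=0$ is at least $\gamma_P(\mu)$; (3) $\partial_y^u\partial_x^aF(0,0)=0$ for all $(u,a)\in G(P)$.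
   Context: Level function $\gamma_P$ of a partition $P=(m_1\ge\dots\ge m_\ell)$ of $r$: number the boxes of its Young diagram (row $j$ has $m_j$ boxes) by $1,\dots,r$, top to bottom within each column, columns left to right; $\gamma_P(k)$ is the column index of box $k$. Level domain: $G(P)=\{(u,a)\in\mathbb Z^2:0\le u<r,\ 0\le a<\gamma_P(r-u)\}$. *)

(* Defs.v *)
From HB Require Import structures.
From mathcomp Require Import all_boot all_order all_algebra.
Set Implicit Arguments. Unset Strict Implicit. Unset Printing Implicit Defensive.
Import Order.TTheory GRing.Theory Num.Theory.

(* Bivariate polynomials: F : {poly {poly C}}; the OUTER variable is y,
   the INNER variable is x.  So F`_i is the coefficient of y^i, a
   polynomial in x, and (F`_i)`_k is the coefficient of x^k y^i. *)

Definition is_partition (P : seq nat) (r : nat) : Prop :=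
  [/\ sorted geq P, all (fun m => 0 < m) P & sumn P = r].

(* height of column c (1-based) of the Young diagram: #{ j | m_j >= c } *)
Definition col_height (P : seq nat) (c : nat) : nat := count (fun m => c <= m) P.

(* the column indices of the boxes, listed in the box numbering order
   (columns left to right, top to bottom within each column) *)
Definition box_columns (P : seq nat) : seq nat :=
  flatten [seq nseq (col_height P c) c | c <- iota 1 (foldr maxn 0 P)].

(* level function: gamma_P(k) = column index of box number k (1 <= k <= r) *)
Definition gamma (P : seq nat) (k : nat) : nat := nth 0 (box_columns P) k.-1.

Local Open Scope ring_scope.
Section Bivariate.
Variable C : fieldType.

Definition curve_poly (r : nat) (s : nat -> {poly C}) : {poly {poly C}} :=
  'X^r + \sum_(1 <= mu < r.+1) (s mu)%:P * 'X^(r - mu).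

Definition pderiv_at0 (F : {poly {poly C}}) (u a : nat) : C :=
  ((map_poly (fun p : {poly C} => p^`(a)) (F^`(u))).[0]).[0].

Definition ord0_ge (s : {poly C}) (n : nat) : Prop := forall i, (i < n)%N -> s`_i = 0.

Definition mult0_ge (G : {poly {poly C}}) (m : nat) : Prop :=
  forall i k, (i + k < m)%N -> (G`_i)`_k = 0.

(* Local equation of the total transform of {F = 0} in M_{j-1}, in the affine
   chart centred at c_j containing the strict transform of l_x and the last
   exceptional divisor: coordinates (x', y) with x = x' * y^(j-1).
   Result: outer variable y, inner variable x'. *)
Definition chart_pullback (j : nat) (F : {poly {poly C}}) : {poly {poly C}} :=
  \sum_(i < size F)
     ((map_poly (fun c : C => c%:P%:P) F`_i).[('X : {poly C})%:P * 'X^(j.-1)]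
        * 'X^i).
End Bivariate.

(* Main.v *)
Require Import Defs.
From HB Require Import structures.
From mathcomp Require Import all_boot all_order all_algebra.
From mathcomp Require Import zify.
Import Order.TTheory GRing.Theory Num.Theory.
Local Open Scope ring_scope.

Lemma pderiv_at0E (C : numClosedFieldType) (F : {poly {poly C}}) u a :
  pderiv_at0 F u a = (F`_u)`_a *+ u`! *+ a`!.
Proof.
rewrite /pderiv_at0 !horner_coef0 coef_map_id0; last by rewrite raddf0.
rewrite coef_derivn addn0.
rewrite coef_derivn addn0 coefMn !ffactnn.
by rewrite -!mulrnA mulnC.
Qed.

Lemma pderiv_at0_eq0 (C : numClosedFieldType) (F : {poly {poly C}}) u a :
  (pderiv_at0 F u a == 0) = ((F`_u)`_a == 0).
Proof.
by rewrite pderiv_at0E !mulrn_eq0 !(negbTE (lt0n_neq0 (fact_gt0 _))).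
Qed.

Lemma curve_coef (C : fieldType) r s i : (i < r)%N ->
  (curve_poly r s)`_i = s (r - i)%N :> {poly C}.
Proof.
move=> ir; rewrite /curve_poly coefD coefXn (ltn_eqF ir) add0r coef_sum.
rewrite (eq_big_nat _ _ (F2 := fun mu => if mu == (r - i)%N then s mu else 0)).
  by rewrite -big_mkcond /= big_nat1_eq; case: ifP => //; lia.
move=> mu /andP[h1 h2]; rewrite coefCM coefXn.
have -> : (i == r - mu)%N = (mu == r - i)%N by apply/eqP/eqP; lia.
by case: eqP => _; rewrite ?mulr1 ?mulr0.
Qed.

Lemma chart_term (C : fieldType) (p : {poly C}) m i n k :
  (((map_poly (fun c : C => c%:P%:P) p).[('X : {poly C})%:P * 'X^m]
        * 'X^i)`_n)`_k = if (n == i + k * m)%N then p`_k else 0.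
Proof.
have hs : (size (map_poly (fun c : C => c%:P%:P) p) <= maxn (size p) k.+1)%N.
  by apply: leq_trans (leq_maxl _ _); rewrite /map_poly; apply: size_poly.
rewrite (horner_coef_wide _ hs) mulr_suml coef_sum coef_sum.
rewrite (eq_bigr (fun t : 'I_(maxn (size p) k.+1) =>
   if (t == k :> nat) then (if (n == i + k * m)%N then p`_k else 0) else 0)).
  rewrite -(big_mkord xpredT (fun t => if (t == k) then (if (n == i + k * m)%N then p`_k else 0) else 0)) /=.
  rewrite -big_mkcond /= big_nat1_eq leq_max ltnSn orbT /=.
  by [].
move=> t _.
rewrite coef_map_id0 //.
rewrite exprMn -rmorphXn -exprM.
rewrite mulrA -rmorphM -mulrA -exprD coefCM coefXn /=.
have -> : (n == m * t + i)%N = (n == i + t * m)%N by rewrite addnC mulnC.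
case: (eqVneq (t : nat) k) => [-> | tk].
  case: (n == (i + k * m)%N); rewrite ?mulr1 ?mulr0 ?coef0 //.
  by rewrite coefCM coefXn eqxx mulr1.
case: (n == (i + t * m)%N); rewrite ?mulr1 ?mulr0 ?coef0 //.
by rewrite coefCM coefXn eq_sym (negbTE tk) mulr0.
Qed.

Lemma chart_coef (C : fieldType) j (F : {poly {poly C}}) n k :
  ((chart_pullback j F)`_n)`_k =
  if (k * j.-1 <= n)%N then (F`_(n - k * j.-1))`_k else 0.
Proof.
rewrite /chart_pullback coef_sum coef_sum.
under eq_bigr => i _ do rewrite chart_term.
rewrite -(big_mkord xpredT (fun i => if (n == i + k * j.-1)%N then F`_i`_k else 0)) /=.
case: leqP => hk.
  rewrite (eq_bigr (fun i => if i == (n - k * j.-1)%N then F`_i`_k else 0)); last first.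
    by move=> i _; have -> : (n == i + k * j.-1)%N = (i == n - k * j.-1)%N by apply/eqP/eqP; lia.
  rewrite -big_mkcond /= big_nat1_eq /=; case: ifP => // hs.
  have -> : F`_(n - k * j.-1) = 0 by rewrite nth_default // leqNgt hs.
  by rewrite coef0.
rewrite big1 // => i _; case: eqP => //; lia.
Qed.
Local Close Scope ring_scope.

Lemma sumn_min_le k s : sumn (map (minn k) s) <= sumn s.
Proof. elim: s => //= m s IH; by rewrite leq_add // geq_minr. Qed.

Lemma sumn_min_all k s : all (fun x => x <= k) s -> sumn (map (minn k) s) = sumn s.
Proof. elim: s => //= m s IH /andP[h1 h2]; by rewrite IH // (minn_idPr h1). Qed.

Lemma sumn_take_le k s j : all (fun x => x <= k) s -> sumn (take j s) <= k * j.
Proof.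
elim: s j => [|m s IH] [|j] //= /andP[h1 h2].
rewrite mulnS leq_add //; exact: IH.
Qed.

Lemma geq_trans : transitive geq.
Proof. move=> a b c /= h1 h2; exact: leq_trans h2 h1. Qed.

Lemma exj (P : seq nat) k i : sorted geq P ->
  (exists j, (1 <= j <= size P) /\ (i + k * j < sumn (take j P))) <->
  (i + sumn (map (minn k) P) < sumn P).
Proof.
elim: P i => [|m P IH] i /=.
  by move=> _; split => [[j [/andP[h1 h2] _]]|//]; lia.
move=> hp; have sP := path_sorted hp.
have aP : all (fun x => x <= m) P by have := order_path_min geq_trans hp.
have hle := sumn_min_le k P.
case: (ltnP k m) => km.
  rewrite ?(minn_idPl (ltnW km)).
  case: (ltnP (i + k) m) => ikm.
    split=> _; last by exists 1; rewrite /= take0 /=; lia.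
    lia.
  have [IH1 IH2] := IH (i + k - m) sP.
  split.
    move=> [[|j] [/andP[h1 h2] h3]] //=; move: h3 => /=.
    case: j h1 h2 => [|j] h1 h2; first by rewrite take0 /=; lia.
    move=> h3.
    have : i + k - m + sumn [seq minn k i | i <- P] < sumn P.
      by apply: IH1; exists j.+1; split => //; lia.
    move: (sumn _) => S.
    lia.
  move=> h; have [j [hj1 hj2]] : exists j, (1 <= j <= size P) /\ (i + k - m + k * j < sumn (take j P)).
    by apply: IH2; lia.
  by exists j.+1; split => //=; lia.
have aPk : all (fun x => x <= k) P.
  by apply/allP => x /(allP aP) /= h; exact: leq_trans h km.
rewrite ?(minn_idPr km) (@sumn_min_all k P aPk).
split; last by lia.
move=> [[|j] [_ h]] //=; move: h => /=.
have := @sumn_take_le k P j aPk; lia.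
Qed.

Definition G (P : seq nat) a n := flatten [seq nseq (col_height P c) c | c <- iota a n].

Lemma mem_G P a n x : x \in G P a n -> a <= x < a + n.
Proof.
by move/flatten_mapP => [c]; rewrite mem_iota mem_nseq => hc /andP[_ /eqP ->].
Qed.

Lemma sumn_minS n s :
  sumn (map (minn n.+1) s) = sumn (map (minn n) s) + count (fun m => n.+1 <= m) s.
Proof.
elim: s => //= m s ->.
by case: (leqP n.+1 m) => h /=; lia.
Qed.

Lemma size_G P n : size (G P 1 n) = sumn (map (minn n) P).
Proof.
rewrite /G size_flatten /shape -map_comp.
elim: n => [|n IH].
  by elim: P => //= m P <-; rewrite min0n.
have -> : iota 1 n.+1 = iota 1 n ++ [:: n.+1] by have := iotaD 1 n 1; rewrite addn1 => ->.
rewrite map_cat sumn_cat IH sumn_minS /= addn0.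
by rewrite size_nseq.
Qed.

Lemma le_foldr_max P m : m \in P -> m <= foldr maxn 0 P.
Proof.
elim: P => //= a P IH; rewrite in_cons => /orP[/eqP -> | h].
  exact: leq_maxl.
exact: leq_trans (IH h) (leq_maxr _ _).
Qed.

Lemma G_nil P s : (forall c, c \in s -> col_height P c = 0) ->
  flatten [seq nseq (col_height P c) c | c <- s] = [::].
Proof.
elim: s => //= c s IH h; rewrite h ?mem_head //= IH // => d hd.
by apply: h; rewrite in_cons hd orbT.
Qed.

Lemma box_split P k :
  box_columns P = G P 1 k ++ G P k.+1 (foldr maxn 0 P).
Proof.
set N := foldr maxn 0 P.
have -> : box_columns P = G P 1 (N + k).
  rewrite /G iotaD map_cat flatten_cat [X in _ ++ X]G_nil ?cats0 // => c.
  rewrite mem_iota => /andP[h1 _].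
  apply/eqP; rewrite -leqn0 leqNgt -has_count; apply/negP => /hasP [m mP hm].
  have := @le_foldr_max P m mP; rewrite -/N; lia.
by rewrite addnC /G iotaD map_cat flatten_cat.
Qed.

Lemma size_box P : size (box_columns P) = sumn P.
Proof.
rewrite /box_columns -/(G P 1 _) size_G; congr sumn.
transitivity [seq id i | i <- P]; last exact: map_id.
apply/eq_in_map => m mP /=.
exact/minn_idPr/(@le_foldr_max P m mP).
Qed.

Lemma gamma_lt P k mu : 0 < mu <= sumn P ->
  (k < gamma P mu) = (sumn (map (minn k) P) < mu).
Proof.
case: mu => // mu /= muP.
have hs := size_box P; rewrite (box_split P k) size_cat size_G in hs.
rewrite /gamma (box_split P k) nth_cat size_G succnK.
case: ifP => h.
  have : nth 0 (G P 1 k) mu \in G P 1 k by apply: mem_nth; rewrite size_G.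
  move/mem_G; lia.
move/negbT: h; rewrite -leqNgt => h.
set S := sumn [seq minn k i | i <- P] in hs h *; set B := G P k.+1 _ in hs *.
have : nth 0 B (mu - S)
   \in B by apply: mem_nth; rewrite ltn_subLR // hs.
move/mem_G; lia.
Qed.

Local Open Scope ring_scope.

Theorem mainTheorem18 (C : numClosedFieldType) (r : nat) (P : seq nat)
    (s : nat -> {poly C}) :
  is_partition P r ->
  let F := curve_poly r s in
  [<-> (forall j, (1 <= j <= size P)%N ->
          mult0_ge (chart_pullback j F) (sumn (take j P)));
       (forall mu, (1 <= mu <= r)%N -> ord0_ge (s mu) (gamma P mu));
       (forall u a, (u < r)%N -> (a < gamma P (r - u))%N ->
          pderiv_at0 F u a = 0)].
Proof.
move=> [hsort _ hsum] F.
pose Q := forall i k, (i + sumn (map (minn k) P) < r)%N -> (F`_i)`_k = 0.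
have E1 : (forall j, (1 <= j <= size P)%N ->
          mult0_ge (chart_pullback j F) (sumn (take j P))) <-> Q.
  split.
    move=> h i k hik.
    have [j [hj hj2]] := (proj2 (exj P k i hsort)) (ltac:(rewrite hsum; exact hik)).
    case: j hj hj2 => [//|j] hj hj2.
    have := h j.+1 hj (i + k * j) k.
    rewrite chart_coef /= leq_addl addnK; apply; rewrite mulnS in hj2; lia.
  move=> hQ j hj n k hnk; rewrite chart_coef; case: ifP => // hle.
  apply: hQ; rewrite -hsum; apply/(exj P k _ hsort); exists j; split => //.
  case: j hj hle hnk => [//|j] _ /= hle hnk; rewrite mulnS; lia.
have E2 : (forall mu, (1 <= mu <= r)%N -> ord0_ge (s mu) (gamma P mu)) <-> Q.
  split.
    move=> h i k hik.
    have ir : (i < r)%N by lia.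
    rewrite /F curve_coef //; apply: h; first by lia.
    by rewrite gamma_lt; lia.
  move=> hQ mu hmu k hk.
  have := hQ (r - mu)%N k; rewrite /F curve_coef; last by lia.
  rewrite (_ : (r - (r - mu))%N = mu); last by lia.
  apply; move: hk; rewrite gamma_lt; lia.
have E3 : (forall u a, (u < r)%N -> (a < gamma P (r - u))%N ->
          pderiv_at0 F u a = 0) <-> Q.
  split.
    move=> h i k hik; apply/eqP; rewrite -pderiv_at0_eq0; apply/eqP.
    apply: h; first by lia.
    by rewrite gamma_lt; lia.
  move=> hQ u a hu ha; apply/eqP; rewrite pderiv_at0_eq0; apply/eqP.
  apply: hQ; move: ha; rewrite gamma_lt; lia.
tfae.
- by move/E1/E2.
- by move/E2/E3.
- by move/E3/E1.
Qed.
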